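(* Let $\theta>0$ and $\ell\in[m]$. Consider an instance of stochastic $\mathrm{Top}_\ell$-norm load balancing on $m$ identical machines with independent nonnegative job random variables $\{X_j\}_{j\in J}$, where for each job $j$ the distribution of $X_j$ is supported on $\{0\}\cup[\theta,\infty)$, i.e. $\Pr[0<X_j<\theta]=0$. (i) If $\sum_{j\in J}\mathbb{E}[X_j]\le\ell\theta$, then for any assignment $\sigma$, $\mathbb{E}[\mathrm{Top}_\ell(\mathcal{L}^\sigma)]\le2\ell\theta$. (ii) If $\sum_{j\in J}\mathbb{E}[X_j]>\ell\theta$, then for any assignment $\sigma$, $\mathbb{E}[\mathrm{Top}_\ell(\mathcal{L}^\sigma)]>\ell\theta/2$.
   Context: An assignment $\sigma:J\to[m]$ induces the random load vector $\mathcal{L}^\sigma$ with $\mathcal{L}^\sigma_i=\sum_{j:\sigma(j)=i}X_j$. For $x\in\mathbb{R}^m_{\ge0}$, $\mathrm{Top}_\ell(x)$ is the sum of the $\ell$ largest coordinates of $x$. *)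

(* Defs.v *)
From HB Require Import structures.
From mathcomp Require Import all_boot all_order all_algebra.
From mathcomp Require Import all_classical all_reals all_analysis.
Set Implicit Arguments. Unset Strict Implicit. Unset Printing Implicit Defensive.
Import Order.TTheory GRing.Theory Num.Theory.
Local Open Scope classical_set_scope.
Local Open Scope ring_scope.

Definition mutually_independent d (T : measurableType d) (R : realType)
    (P : probability T R) (J : finType) (X : J -> {RV P >-> R}) : Prop :=
  forall (S : {set J}) (B : J -> set R),
    (forall j, measurable (B j)) ->
    P (\bigcap_(j in [set j | j \in S]) (X j @^-1` B j)) =
      (\prod_(j in S) P (X j @^-1` B j))%E.

Definition Top (R : realType) (m l : nat) (x : 'I_m -> R) : R :=
  \sum_(v <- take l (sort (fun a b : R => b <= a) [seq x i | i <- enum 'I_m])) v.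

Definition load d (T : measurableType d) (R : realType) (P : probability T R)
    (J : finType) (m : nat) (X : J -> {RV P >-> R}) (sigma : J -> 'I_m)
    (t : T) : 'I_m -> R :=
  fun i => \sum_(j | sigma j == i) X j t.

(* Main.v *)
Require Import Defs.
From HB Require Import structures.
From mathcomp Require Import all_boot all_order all_algebra.
From mathcomp Require Import all_classical all_reals all_analysis.
From mathcomp Require Import measurable_realfun.
From mathcomp Require Import lra.
Import Order.TTheory GRing.Theory Num.Theory.
Local Open Scope classical_set_scope.
Local Open Scope ring_scope.
Section Comb.
Variable R : realType.

Local Notation r := (fun a b : R => b <= a).
Let r_tr : transitive r. Proof. by move=> y x z /= h1 h2; rewrite /r (le_trans h2 h1). Qed.
Let r_refl : reflexive r. Proof. by move=> x; rewrite /r. Qed.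
Let r_tot : total r. Proof. by move=> x y; rewrite /r le_total. Qed.

Lemma sum_sortE (m : nat) (f : R -> R) (x : 'I_m -> R) :
  \sum_(v <- sort r [seq x i | i <- enum 'I_m]) f v = \sum_i f (x i).
Proof.
by rewrite (perm_big _ (permEl (perm_sort _ _))) big_map big_enum.
Qed.

Lemma Top_le_sum (m l : nat) (x : 'I_m -> R) :
  (forall i, 0 <= x i) -> Top l x <= \sum_i x i.
Proof.
move=> x0; rewrite /Top -(@sum_sortE _ (fun v => v)).
set s := sort _ _.
rewrite -{2}(cat_take_drop l s) big_cat /= lerDl.
rewrite big_seq; apply: sumr_ge0 => v /mem_drop; rewrite mem_sort => /mapP [i _ ->]; exact: x0.
Qed.

Lemma Top_ge_sum (m l : nat) (x : 'I_m -> R) (A : {set 'I_m}) :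
  (forall i, 0 <= x i) -> (0 < l <= m)%N -> (#|A| <= l)%N ->
  \sum_(i in A) x i <= Top l x.
Proof.
move=> x0 /andP[l0 lm] Al.
rewrite /Top.
set s := sort r _.
have ss : sorted r s by apply: sort_sorted.
have szs : size s = m by rewrite size_sort size_map size_enum_ord.
have s0 v : v \in s -> 0 <= v.
  by rewrite mem_sort => /mapP [i _ ->].
set c := nth 0 s l.-1.
have lm1 : (l.-1 < size s)%N by rewrite szs; case: l l0 lm {Al c}.
have c0 : 0 <= c by apply: s0; exact: mem_nth.
have Htake v : v \in take l s -> c <= v.
  move=> /(nthP 0) [i]; rewrite size_takel ?szs // => il <-.
  rewrite nth_take //.
  have := @sorted_leq_nth _ _ r_tr r_refl 0 s ss i l.-1.
  rewrite !inE szs => /(_ (leq_trans il lm)); rewrite -szs => /(_ lm1).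
  by apply; rewrite -ltnS (ltn_predK il).
have Hdrop v : v \in drop l s -> v <= c.
  move=> /(nthP 0) [i]; rewrite size_drop => il <-.
  rewrite nth_drop.
  have := @sorted_leq_nth _ _ r_tr r_refl 0 s ss l.-1 (l + i).
  rewrite !inE => /(_ lm1); rewrite -ltn_subRL => /(_ il).
  by apply; rewrite (leq_trans (leq_pred l)) // leq_addr.
have E : \sum_(v <- take l s) v = l%:R * c + \sum_i Num.max (x i - c) 0.
  rewrite -(@sum_sortE _ (fun v => Num.max (v - c) 0)) -/s.
  rewrite -{2}(cat_take_drop l s) big_cat /=.
  rewrite [X in _ + (_ + X)]big_seq_cond [X in _ + (_ + X)]big1 ?addr0; last first.
    move=> v /andP[/Hdrop vc _]; apply/max_idPr; by rewrite subr_le0.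
  rewrite big_seq_cond [X in _ = _ + X]big_seq_cond.
  rewrite [X in _ = _ + X](eq_bigr (fun v => v - c)); last first.
    by move=> v /andP[/Htake vc _]; apply/max_idPl; rewrite subr_ge0.
  rewrite -!big_seq_cond sumrB big_const_seq count_predT size_takel ?szs //.
  by rewrite iter_addr addr0 mulr_natl addrC subrK.
rewrite E.
apply: (@le_trans _ _ (\sum_(i in A) (c + Num.max (x i - c) 0))).
  by apply: ler_sum => i _; rewrite -lerBlDl le_max lexx.
rewrite big_split /= sumr_const mulr_natl lerD //.
  by rewrite -[c *+ #|A|]mulr_natl -[c *+ l]mulr_natl ler_wpM2r // ler_nat.
rewrite [X in _ <= X](bigID (mem A)) /= lerDl; apply: sumr_ge0 => i _.
by rewrite le_max lexx orbT.
Qed.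

Section Load.
Variables (J : finType) (m l : nat) (x : J -> R) (sigma : J -> 'I_m).
Hypothesis x0 : forall j, 0 <= x j.
Hypothesis hl : (0 < l <= m)%N.
Let L := fun i : 'I_m => \sum_(j | sigma j == i) x j.

Lemma L0 i : 0 <= L i. Proof. by apply: sumr_ge0 => j _. Qed.

Lemma Top_ge0 : 0 <= Top l L.
Proof. by have := @Top_ge_sum m l L finset.set0 L0 hl; rewrite cards0 big_set0 => ->. Qed.

Lemma Top_le_sumx : Top l L <= \sum_j x j.
Proof.
apply: (le_trans (@Top_le_sum m l L L0)).
by rewrite (partition_big sigma xpredT) //=.
Qed.

Lemma Top_ge_sumx (B : {set J}) : (#|B| <= l)%N -> \sum_(j in B) x j <= Top l L.
Proof.
move=> Bl; apply: le_trans (@Top_ge_sum m l L (sigma @: B) L0 hl _); last first.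
  exact: leq_trans (leq_imset_card _ _) Bl.
rewrite (partition_big sigma (mem (sigma @: B))) /=; last by move=> j jB; apply: imset_f.
apply: ler_sum => i _; rewrite /L [X in _ <= X]big_mkcond [X in X <= _]big_mkcond /=.
apply: ler_sum => j _; case: (sigma j == i); rewrite ?andbT ?andbF //.
by case: (j \in B).
Qed.

Variable theta : R.
Hypothesis th0 : 0 < theta.
Let Bg : {set J} := [set k | theta <= x k]%SET.

Lemma Top_big : (l <= #|Bg|)%N -> l%:R * theta <= Top l L.
Proof.
move=> /card_geqP [s [us ss sBg]].
apply: (le_trans _ (@Top_ge_sumx [set k in s] _)); last by rewrite cardsE (card_uniqP us) ss.
rewrite -ss -(card_uniqP us) -cardsE -sum1_card natr_sum mulr_suml.
by apply: ler_sum => j; rewrite inE => /sBg; rewrite inE mul1r.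
Qed.

Lemma Top_small :
  \sum_j (x j * ((theta <= x j)%R)%:R) * (#|~: [set j] :&: Bg| < l)%:R <= Top l L.
Proof.
case: (leqP #|Bg| l) => hB.
  apply: (le_trans _ (@Top_ge_sumx Bg hB)).
  rewrite [X in _ <= X]big_mkcond; apply: ler_sum => j _; rewrite inE.
  case: (theta <= x j); rewrite ?mulr1 ?mulr0 ?mul0r //.
  by case: (_ < l)%N; rewrite ?mulr1 ?mulr0.
rewrite big1 ?Top_ge0 // => j _.
case hj: (theta <= x j); rewrite ?mulr0 ?mul0r // mulr1.
suff -> : (#|~: [set j] :&: Bg| < l)%N = false by rewrite mulr0.
apply/negbTE; rewrite -leqNgt.
have : j \in Bg by rewrite inE hj.
move=> jB; move: hB; rewrite (cardsD1 j Bg) jB add1n ltnS.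
by rewrite finset.setDE finset.setIC.
Qed.
End Load.
End Comb.

Lemma ge0_le_integral_nm d (T : measurableType d) (R : realType)
  (mu : {measure set T -> \bar R}) (f1 f2 : T -> \bar R) :
  (forall x, (0 <= f1 x)%E) -> (forall x, (f1 x <= f2 x)%E) ->
  (\int[mu]_x f1 x <= \int[mu]_x f2 x)%E.
Proof.
move=> f10 f12.
have f20 x : (0 <= f2 x)%E by apply: le_trans (f12 x).
rewrite !ge0_integralTE //; apply: ereal_sup_le => _ [h hf <-].
by exists h => //= x; apply: le_trans (f12 x).
Qed.

Section Indep.
Local Open Scope ereal_scope.
Variables (d : measure_display) (T : measurableType d) (R : realType)
  (P : probability T R) (J : finType) (X : J -> {RV P >-> R}).
Hypothesis HI : mutually_independent X.

Definition EI (S : {set J}) (B : J -> set R) :=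
  \bigcap_(k in [set k | k \in S]) (X k @^-1` B k).

Lemma EI_meas S B : (forall k, measurable (B k)) -> measurable (EI S B).
Proof.
move=> mB; apply: fin_bigcap_measurable; first exact: finite_finset.
move=> k _; rewrite -[X in measurable X]setTI; exact: measurable_funPT.
Qed.

Lemma indep_set j (S : {set J}) (B : J -> set R) (A : set R) : j \notin S -> (forall k, measurable (B k)) ->
  measurable A ->
  P (X j @^-1` A `&` EI S B) = P (X j @^-1` A) * P (EI S B).
Proof.
move=> jS mB mA.
pose B' k := if k == j then A else B k.
have mB' k : measurable (B' k) by rewrite /B'; case: ifP.
have -> : X j @^-1` A `&` EI S B = EI (j |: S) B'.
  apply/seteqP; split => t.
    move=> [XA EIt] k /=; rewrite !inE => /orP[/eqP->|kS].
      by rewrite /B' eqxx.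
    rewrite /B'; case: ifP => [/eqP kj|_]; first by move: kS; rewrite kj (negbTE jS).
    exact: EIt.
  move=> H; split.
    by have := H j; rewrite /B' eqxx /= !inE eqxx => /(_ isT).
  move=> k /= kS; have := H k; rewrite /= !inE kS orbT => /(_ isT).
  by rewrite /B'; case: ifP => // /eqP kj; move: kS; rewrite kj (negbTE jS).
rewrite /EI HI // HI // big_setU1 //= /B' eqxx; congr (_ * _).
apply: eq_bigr => k kS; case: ifP => // /eqP kj; move: kS; by rewrite kj (negbTE jS).
Qed.

Lemma indep_int j (S : {set J}) (B : J -> set R) (h : R -> R) :
  j \notin S -> (forall k, measurable (B k)) -> measurable_fun setT h ->
  (forall x, 0 <= h x)%R ->
  \int[P]_t ((h (X j t)) * \1_(EI S B) t)%:E =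
  \int[P]_t (h (X j t))%:E * P (EI S B).
Proof.
move=> jS mB mh h0.
set E := EI S B.
have mE : measurable E by exact: EI_meas.
have mhX : measurable_fun setT (fun t => (h (X j t))%:E).
  by apply: measurableT_comp => //; apply: measurableT_comp => //; exact: measurable_funPT.
have mh2 : measurable_fun setT (fun y => (h y)%:E) by apply: measurableT_comp.
transitivity (\int[P]_(t in E) (h (X j t))%:E).
  rewrite [RHS]integral_mkcond; apply: eq_integral => t _.
  rewrite patchE indicE; case: ifP => _; by rewrite ?mulr1 ?mulr0.
rewrite (eq_measure_integral (mrestr P mE)); last first.
  by move=> A mA AE; rewrite /= /mrestr (setIidl AE).
have := @ge0_negligible_integral _ _ _ (mrestr P mE) setT (~` E)
  (fun t => (h (X j t))%:E) (measurableC mE) measurableT mhX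
  (fun t _ => (introT idP (h0 (X j t)) : (0 <= (h (X j t))%:E)%E)).
rewrite setTD setCK => <-; last by rewrite /= /mrestr setICl measure0.
have := @ge0_integral_pushforward _ _ _ _ _ _ (@measurable_funPT _ _ _ _ (X j))
  (mrestr P mE) setT (fun y => (h y)%:E) measurableT mh2
  (fun y _ => (introT idP (h0 y) : (0 <= (h y)%:E)%E)).
rewrite preimage_setT => <-.
have PE0 : (0 <= fine (P E))%R by apply: fine_ge0; exact: measure_ge0.
have PEE : ((fine (P E))%:E = P E) by rewrite fineK // fin_num_measure.
rewrite (eq_measure_integral (mscale (NngNum PE0) (distribution P (X j)))); last first.
  move=> A mA _; rewrite /= /mscale /= /distribution /pushforward /mrestr.
  by rewrite indep_set // PEE muleC.
rewrite ge0_integral_mscale //=; last by move=> y _; rewrite lee_fin.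
rewrite ge0_integral_distribution //.
by rewrite PEE muleC.
Qed.

Variable theta : R.
Definition Bth : set R := `[theta, +oo[%classic.
Definition BZ (Z : {set J}) k : set R := if k \in Z then Bth else ~` Bth.
Lemma BZ_meas Z k : measurable (BZ Z k).
Proof. rewrite /BZ; case: ifP => _; [exact: measurable_itv| apply: measurableC; exact: measurable_itv]. Qed.
Definition EP (S Z : {set J}) := EI S (BZ Z).
Definition Big t : {set J} := [set k | (theta <= X k t)%R].
Definition F (S : {set J}) (Q : pred {set J}) t : R :=
  (\sum_(Z : {set J} | (Z \subset S) && Q Z) \1_(EP S Z) t)%R.

Lemma EP_mem (S Z : {set J}) t : Z \subset S -> (t \in EP S Z) = (Z == S :&: Big t).
Proof.
move=> ZS; apply/idP/idP.
  rewrite in_setE => H; apply/eqP/setP => k; rewrite !inE.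
  case kS: (k \in S); last by apply/negbTE/negP => /(fintype.subsetP ZS); rewrite kS.
  have := H k; rewrite /= kS => /(_ isT); rewrite /BZ /Bth.
  by case: ifP => _; rewrite /= in_itv /= andbT => // /negP /negbTE.
move=> /eqP ->; rewrite in_setE => k /= kS; rewrite /BZ /Bth !inE kS /=.
by case: ifP => /= h; rewrite in_itv /= andbT ?h //; apply/negP; rewrite h.
Qed.

Lemma F_val (S : {set J}) (Q : pred {set J}) t : F S Q t = (Q (S :&: Big t))%:R%R.
Proof.
rewrite /F; under eq_bigr => Z /andP[ZS _] do rewrite indicE (EP_mem _ _ _ ZS).
set Z0 := S :&: Big t.
case QZ0: (Q Z0).
  rewrite (bigD1 Z0) /=; last by rewrite subsetIl QZ0.
  rewrite eqxx big1 ?addr0 // => Z /andP[_ ZZ0]; by rewrite (negbTE ZZ0).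
rewrite big1 // => Z /andP[_ QZ]; case: eqP => // ZZ0.
by move: QZ; rewrite ZZ0 QZ0.
Qed.

Lemma F_filter (S : {set J}) (Q : pred {set J}) :
  F S Q = fun t => (\sum_(Z <- [seq Z : {set J} <- index_enum {set J} | (Z \subset S) && Q Z])
     \1_(EP S Z) t)%R.
Proof. by apply/funext => t; rewrite /F big_filter. Qed.

Lemma F_meas (S : {set J}) (Q : pred {set J}) : measurable_fun setT (F S Q).
Proof.
rewrite F_filter; apply: measurable_sum => Z; apply: measurable_indic.
by apply: EI_meas => k; exact: BZ_meas.
Qed.

Lemma F_int (S : {set J}) (Q : pred {set J}) :
  \int[P]_t (F S Q t)%:E = \sum_(Z : {set J} | (Z \subset S) && Q Z) P (EP S Z).
Proof.
rewrite F_filter.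
under eq_integral do rewrite -sumEFin.
rewrite ge0_integral_sum //.
rewrite big_filter; apply: eq_bigr => Z _.
by rewrite integral_indic ?setIT //; apply: EI_meas => k; exact: BZ_meas.
move=> Z; apply: measurableT_comp => //; apply: measurable_indic.
by apply: EI_meas => k; exact: BZ_meas.
Qed.

Lemma F_indep j (S : {set J}) (Q : pred {set J}) (h : R -> R) :
  j \notin S -> measurable_fun setT h -> (forall x, 0 <= h x)%R ->
  \int[P]_t (h (X j t) * F S Q t)%:E =
  \int[P]_t (h (X j t))%:E * \int[P]_t (F S Q t)%:E.
Proof.
move=> jS mh h0.
rewrite F_int F_filter.
under eq_integral do rewrite big_distrr -sumEFin.
rewrite ge0_integral_sum //; last 2 first.
- move=> Z; apply: measurableT_comp => //; apply: measurable_funM.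
    by apply: measurableT_comp => //; exact: measurable_funPT.
  apply: measurable_indic; by apply: EI_meas => k; exact: BZ_meas.
- by move=> Z t _; rewrite lee_fin mulr_ge0.
rewrite big_filter ge0_sume_distrr; last by move=> Z _; exact: measure_ge0.
apply: eq_bigr => Z _; apply: indep_int => //; exact: BZ_meas.
Qed.
End Indep.

Theorem lemma11 (d : measure_display) (T : measurableType d) (R : realType)
  (P : probability T R) (J : finType) (m l : nat) (theta : R)
  (X : J -> {RV P >-> R}) :
  0 < theta ->
  (1 <= l <= m)%N ->
  mutually_independent X ->
  (forall j t, 0 <= X j t) ->
  (forall j, P [set t | 0 < X j t < theta] = 0%E) ->
  ((\sum_(j : J) 'E_P[X j] <= (l%:R * theta)%:E)%E ->
     forall sigma : J -> 'I_m,
       ('E_P[fun t => Top l (load X sigma t)] <= (2 * l%:R * theta)%:E)%E)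
  /\
  (((l%:R * theta)%:E < \sum_(j : J) 'E_P[X j])%E ->
     forall sigma : J -> 'I_m,
       ((l%:R * theta / 2)%:E < 'E_P[fun t => Top l (load X sigma t)])%E).
Proof.
move=> th0 hl HI X0 Xsmall.
have mX j : measurable_fun setT (fun t => (X j t)%:E).
  by apply: measurableT_comp => //; exact: measurable_funPT.
have EXE j : ('E_P[X j] = \int[P]_t (X j t)%:E)%E by rewrite unlock.
split.
  move=> hsum sigma; rewrite unlock.
  apply: (@le_trans _ _ (\int[P]_t (\sum_j X j t)%:E)%E).
    apply: ge0_le_integral_nm => t; rewrite lee_fin.
      exact: (Top_ge0 _ _ _ _ (fun j => X j t) sigma (X0^~ t) hl).
    exact: (Top_le_sumx _ _ _ _ (fun j => X j t) sigma (X0^~ t)).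
  under eq_integral do rewrite -sumEFin.
  rewrite ge0_integral_sum //; last by move=> j t _; rewrite lee_fin.
  apply: (le_trans _ (le_trans hsum _)).
    by apply: lee_sum => j _; rewrite EXE.
  rewrite lee_fin -mulrA ler_peMl //; last by rewrite ler1n.
  by rewrite mulr_ge0 // ltW.
move=> hsum sigma.
set Ltop := fun t => Top l (load X sigma t).
have Lt0 t : 0 <= Ltop t.
  exact: (Top_ge0 _ _ _ _ (fun j => X j t) sigma (X0^~ t) hl).
pose Qa := fun Z : {set J} => (l <= #|Z|)%N.
pose Qb := fun Z : {set J} => (#|Z| < l)%N.
pose FF := F d T R P J X theta.
have FFm S Q : measurable_fun setT (fun t => (FF S Q t)%:E).
  by apply: measurableT_comp => //; exact: F_meas.
have FF0 S Q t : 0 <= FF S Q t by rewrite /FF F_val.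
pose pa := (\int[P]_t (FF [set: J]%SET Qa t)%:E)%E.
pose pb := (\int[P]_t (FF [set: J]%SET Qb t)%:E)%E.
have pa0 : (0 <= pa)%E by apply: integral_ge0 => t _; rewrite lee_fin.
have pb0 : (0 <= pb)%E by apply: integral_ge0 => t _; rewrite lee_fin.
have hab : (pa + pb = 1)%E.
  rewrite /pa /pb -ge0_integralD //; last 2 first.
  - by move=> t _; rewrite lee_fin.
  - by move=> t _; rewrite lee_fin.
  under eq_integral => t _.
    rewrite -EFinD /FF !F_val /Qa /Qb.
    have -> : ((l <= #|[set: J]%SET :&: Big d T R P J X theta t|)%N%:R +
      (#|[set: J]%SET :&: Big d T R P J X theta t| < l)%N%:R = 1 :> R).
      by set c := #|_|; case: (leqP l c) => _; rewrite /= ?addr0 ?add0r.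
    over.
  by rewrite integral_cst //= probability_setT mul1e.
have hA : ((l%:R * theta)%:E * pa <= 'E_P[Ltop])%E.
  rewrite /pa -ge0_integralZl //; last 2 first.
  - by move=> t _; rewrite lee_fin.
  - by rewrite lee_fin mulr_ge0 // ltW.
  rewrite unlock; apply: ge0_le_integral_nm => t.
    by rewrite mule_ge0 // lee_fin // mulr_ge0 // ltW.
  rewrite -EFinM lee_fin /FF F_val /Qa finset.setTI.
  case hB: (l <= _)%N; rewrite ?mulr1 ?mulr0 //.
  exact: (Top_big _ _ _ _ (fun j => X j t) sigma (X0^~ t) hl theta hB).
pose h := fun x : R => x * ((theta <= x)%R)%:R.
have h0 x : 0 <= h x.
  rewrite /h; case: (lerP theta x) => hx /=; rewrite ?mulr1 ?mulr0 //.
  exact: le_trans (ltW th0) hx.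
have hm : measurable_fun setT h.
  have -> : h = (fun x => x) \* \1_(`[theta, +oo[%classic).
    apply/funext => x; rewrite /h /= indicE.
    rewrite (_ : (x \in `[theta, +oo[%classic) = (theta <= x)) //.
    by apply/idP/idP; rewrite in_setE /= in_itv /= andbT.
  apply: measurable_funM => //; exact: measurable_indic.
have hXm j : measurable_fun setT (fun t => (h (X j t))%:E).
  by apply: measurableT_comp => //; apply: measurableT_comp.
have hX j : (\int[P]_t (h (X j t))%:E = \int[P]_t (X j t)%:E)%E.
  apply: ae_eq_integral => //.
  exists [set t | 0 < X j t < theta]; split => //.
    rewrite (_ : [set t | _] = X j @^-1` `]0, theta[%classic); last first.
      by apply/seteqP; split => t /=; rewrite in_itv /=.
    rewrite -[X in measurable X]setTI.
    by apply: measurable_funPT => //; exact: measurable_itv.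
    exact: Xsmall.
  move=> t /= /not_implyP [_ H]; apply: contra_notP H => H.
  rewrite /h; case: (lerP theta (X j t)) => hx /=; rewrite ?mulr1 ?mulr0 //.
  have : ~~ (0 < X j t) by apply/negP => h1; apply: H; rewrite h1.
  by rewrite lt_neqAle X0 andbT negbK => /eqP <-.
have hB : ((\sum_j 'E_P[X j]) * pb <= 'E_P[Ltop])%E.
  pose cj (j : J) := FF (~: [set j]) Qb.
  apply: (@le_trans _ _ (\int[P]_t (\sum_j h (X j t) * cj j t)%:E)%E); last first.
    rewrite expectation.unlock; apply: ge0_le_integral_nm => t; rewrite lee_fin.
      by apply: sumr_ge0 => j _; exact: mulr_ge0 (h0 _) (FF0 _ _ _).
    rewrite /cj /FF; under eq_bigr => j _ do rewrite F_val.
    exact: (Top_small _ _ _ _ (fun j => X j t) sigma (X0^~ t) hl theta).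
  under eq_integral do rewrite -sumEFin.
  rewrite ge0_integral_sum //; last 2 first.
  - move=> j; apply: measurableT_comp => //; apply: measurable_funM.
      by apply: measurableT_comp => //; exact: measurable_funPT.
    exact: F_meas.
  - by move=> j t _; rewrite lee_fin; exact: mulr_ge0 (h0 _) (FF0 _ _ _).
  rewrite ge0_sume_distrl; last by move=> j _; rewrite EXE integral_ge0 // => t _; rewrite lee_fin.
  apply: lee_sum => j _.
  rewrite /cj /FF F_indep //; last by rewrite !inE eqxx.
  rewrite hX -EXE; apply: lee_wpmul2l; first by rewrite EXE integral_ge0 // => t _; rewrite lee_fin.
  apply: ge0_le_integral_nm => t; rewrite lee_fin //.
  rewrite /FF F_val F_val /Qb finset.setTI.
  have H : (#|~: [set j] :&: Big d T R P J X theta t| <= #|Big d T R P J X theta t|)%N.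
    by apply: subset_leq_card; rewrite finset.subsetIr.
  case: (ltnP #|Big d T R P J X theta t| l) => h1; last by rewrite ler0n.
  by rewrite (leq_ltn_trans H h1).
have pbNy : pb != -oo%E by rewrite gt_eqF // (lt_le_trans _ pb0) // ltNy0.
have paNy : pa != -oo%E by rewrite gt_eqF // (lt_le_trans _ pa0) // ltNy0.
have [a Ha] : exists a, pa = a%:E.
  case E: pa => [a| |]; first by exists a.
  - by move: hab; rewrite E addye.
  - by move: pa0; rewrite E.
have [b Hb] : exists b, pb = b%:E.
  case E: pb => [b| |]; first by exists b.
  - by move: hab; rewrite E addey.
  - by move: pb0; rewrite E.
have hab' : a + b = 1 by apply: EFin_inj; rewrite EFinD -Ha -Hb.
have a0 : 0 <= a by rewrite -lee_fin -Ha.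
have b0 : 0 <= b by rewrite -lee_fin -Hb.
rewrite Ha in hA; rewrite Hb in hB.
have lth : 0 < l%:R * theta by rewrite mulr_gt0 // ltr0n; case/andP: hl.
case: (ltrP (1/2) a) => ha.
  apply: lt_le_trans hA; rewrite -EFinM lte_fin.
  nra.
apply: lt_le_trans hB.
have b12 : 1/2 <= b by lra.
apply: (@le_lt_trans _ _ ((l%:R * theta)%:E * b%:E)%E).
  rewrite -EFinM lee_fin; nra.
by rewrite lte_pmul2r // lte_fin; lra.
Qed.
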